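(* Let $d$ and $m$ be integers, $0<\epsilon\le 1$ a real number, and $0<\delta<1$. There is a non-adaptive randomized group testing algorithm that makes $O((1/\epsilon^2)\log(1/\delta))$ tests and: if $d<m$ then, with probability at least $1-\delta$, it returns $0$; if $d>(1+\epsilon)m$ then, with probability at least $1-\delta$, it returns $1$; if $m\le d\le(1+\epsilon)m$ it returns $0$ or $1$. Here $d$ is the (unknown) number of defective items.
   Context: Group testing: items $X=[n]$, unknown defective set $I\subseteq X$ with $d=|I|$. A test $Q\subseteq X$ has answer $1$ if $Q\cap I\neq\emptyset$ and $0$ otherwise. A non-adaptive (randomized) algorithm chooses all its tests before seeing any answer, then computes its output from the answers. Logarithms are base 2. *)

(* Defs.v *)
From HB Require Import structures.
From mathcomp Require Import all_boot all_order all_algebra.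
From mathcomp Require Import reals exp.
Set Implicit Arguments. Unset Strict Implicit. Unset Printing Implicit Defensive.
Import Order.TTheory GRing.Theory Num.Theory.
Local Open Scope ring_scope.

Definition test_answer (n : nat) (I Q : {set 'I_n}) : bool := Q :&: I != set0.

(* A non-adaptive randomized group testing algorithm on items 'I_n making
   t tests: a random seed omega is drawn from a finite sample space with
   probability weights; the t tests depend only on omega (non-adaptive),
   and the output is computed from omega and the vector of answers. *)
Record nonadaptive_alg (R : realType) (n t : nat) := NonAdaptiveAlg {
  seed : finType;
  weight : seed -> R;
  weight_ge0 : forall w, 0 <= weight w;
  weight_sum1 : \sum_(w : seed) weight w = 1;
  tests : seed -> 'I_t -> {set 'I_n};
  decide : seed -> {ffun 'I_t -> bool} -> bool }.

Definition run (R : realType) n t (A : nonadaptive_alg R n t)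
  (I : {set 'I_n}) (w : seed A) : bool :=
  decide w [ffun j => test_answer I (tests w j)].

Arguments run {R n t} A I w.

Definition prob_output (R : realType) n t (A : nonadaptive_alg R n t)
  (I : {set 'I_n}) (b : bool) : R :=
  \sum_(w : seed A | run A I w == b) weight w.

Definition log2 (R : realType) (x : R) : R := ln x / ln 2.

Arguments prob_output {R n t} A I b.

(* Main.v *)
Require Import Defs.
From HB Require Import structures.
From mathcomp Require Import all_boot all_order all_algebra.
From mathcomp Require Import reals sequences exp.
From mathcomp Require Import ring lra.
Import Order.TTheory GRing.Theory Num.Theory.
Local Open Scope ring_scope.

Section Prob.
Variable R : realType.
Variables (n t : nat) (p : R).
Hypothesis p0 : 0 <= p.
Hypothesis p1 : p <= 1.

Definition iw (f : {ffun 'I_n -> bool}) : R := \prod_i (if f i then p else 1 - p).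

Definition Xv (I : {set 'I_n}) (f : {ffun 'I_n -> bool}) : R :=
  (~~ test_answer I [set i | f i])%:R.

Lemma iw_ge0 f : 0 <= iw f.
Proof. apply: prodr_ge0 => i _; case: (f i) => //; by rewrite subr_ge0. Qed.

Lemma iw_sum : \sum_f iw f = 1.
Proof.
rewrite /iw -(bigA_distr_bigA (fun (i : 'I_n) (b : bool) => if b then p else 1 - p)) /=.
by apply: big1 => i _; rewrite big_bool /= addrC subrK.
Qed.

Lemma iw_X I : \sum_f iw f * Xv I f = (1 - p) ^+ #|I|.
Proof.
pose G := fun (i : 'I_n) (b : bool) => if b then (if i \in I then 0 else p) else 1 - p.
transitivity (\sum_(f : {ffun 'I_n -> bool}) \prod_i G i (f i)).
  apply: eq_bigr => f _.
  case E: [exists i, f i && (i \in I)].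
    move/existsP: E => [i /andP [fi iI]].
    rewrite (bigD1 i) //= /G fi iI mul0r /Xv /test_answer.
    have -> : [set i0 | f i0] :&: I != set0.
      by apply/set0Pn; exists i; rewrite !inE fi iI.
    by rewrite mulr0.
  have -> : Xv I f = 1.
    rewrite /Xv /test_answer negbK.
    have -> : [set i0 | f i0] :&: I == set0 => //.
    apply/eqP/setP => i; rewrite !inE.
    by move/existsPn: E => /(_ i); case: (f i); case: (i \in I).
  rewrite mulr1; apply: eq_bigr => i _; rewrite /G.
  case fi: (f i) => //; move/existsPn: E => /(_ i); rewrite fi /=.
  by move/negbTE => ->.
rewrite -(bigA_distr_bigA G) /=.
rewrite (eq_bigr (fun i => if i \in I then 1 - p else 1)); last first.
  by move=> i _; rewrite big_bool /G /=; case: (i \in I); rewrite ?add0r // addrC subrK.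
by rewrite -big_mkcond prodr_const.
Qed.

Lemma expX mu (b : bool) : expR (mu * (b%:R : R)) = 1 + b%:R * (expR mu - 1).
Proof. by case: b; rewrite /= ?mulr1 ?mul1r ?mulr0 ?mul0r ?expR0 ?addr0 // addrC subrK. Qed.
Lemma exp_X I mu : \sum_f iw f * expR (mu * Xv I f) = 1 + (expR mu - 1) * (1 - p) ^+ #|I|.
Proof.
under eq_bigr do rewrite /Xv expX -/(Xv _ _) mulrDr mulr1 mulrA.
by rewrite big_split /= iw_sum -mulr_suml iw_X mulrC.
Qed.

Definition W (w : {ffun 'I_t -> {ffun 'I_n -> bool}}) : R := \prod_j iw (w j).
Definition S I (w : {ffun 'I_t -> {ffun 'I_n -> bool}}) : R := \sum_j Xv I (w j).

Lemma sum_prod (F : 'I_t -> {ffun 'I_n -> bool} -> R) :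
 \sum_(w : {ffun 'I_t -> {ffun 'I_n -> bool}}) \prod_j F j (w j) = \prod_j \sum_f F j f.
Proof. by rewrite bigA_distr_bigA. Qed.

Lemma W_ge0 w : 0 <= W w.
Proof. by apply: prodr_ge0 => j _; apply: iw_ge0. Qed.

Lemma W_sum : \sum_w W w = 1.
Proof. by rewrite /W (sum_prod (fun _ f => iw f)); apply: big1 => j _; apply: iw_sum. Qed.

Lemma W_exp I mu : \sum_w W w * expR (mu * S I w) = (1 + (expR mu - 1) * (1 - p) ^+ #|I|) ^+ t.
Proof.
under eq_bigr do rewrite /S mulr_sumr expR_sum /W -big_split /=.
rewrite (sum_prod (fun _ f => iw f * expR (mu * Xv I f))).
under eq_bigr do rewrite exp_X.
by rewrite prodr_const card_ord.
Qed.

Variable tau : R.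

Definition alg : nonadaptive_alg R n t :=
  @NonAdaptiveAlg R n t {ffun 'I_t -> {ffun 'I_n -> bool}} W W_ge0 W_sum
    (fun w j => [set i | w j i])
    (fun w ans => \sum_j (~~ ans j)%:R < t%:R * tau).

Lemma run_alg I w : run alg I w = (S I w < t%:R * tau).
Proof. by rewrite /run /= /S /Xv; under eq_bigr do rewrite ffunE. Qed.

Lemma prob_sum I : prob_output alg I true + prob_output alg I false = 1.
Proof.
have := W_sum; rewrite (bigID (fun w => run alg I w == true)) /= => <-.
rewrite /prob_output /=; congr (_ + _); apply: eq_bigl => w.
by case: (_ < _).
Qed.

Lemma probT_le I (lam : R) : 0 <= lam ->
  prob_output alg I true <= expR (lam * (t%:R * tau)) * (1 + (expR (- lam) - 1) * (1 - p) ^+ #|I|) ^+ t.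
Proof.
move=> hl; rewrite -W_exp mulr_sumr /prob_output big_mkcond.
apply: ler_sum => w _; rewrite run_alg ?eqb_id ?eqbF_neg /=.
rewrite mulrCA -expRD.
have hW := W_ge0 w.
case: ifP => h.
  rewrite -{1}(mulr1 (W w)); apply: ler_wpM2l => //.
  apply: le_trans (expR_ge1Dx _); rewrite lerDl.
  have : 0 <= t%:R * tau - S I w by rewrite subr_ge0 ltW.
  move=> h2; have := mulr_ge0 hl h2; lra.
by apply: mulr_ge0 => //; apply: ltW; apply: expR_gt0.
Qed.

Lemma probF_le I (lam : R) : 0 <= lam ->
  prob_output alg I false <= expR (- (lam * (t%:R * tau))) * (1 + (expR lam - 1) * (1 - p) ^+ #|I|) ^+ t.
Proof.
move=> hl; rewrite -W_exp mulr_sumr /prob_output big_mkcond.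
apply: ler_sum => w _; rewrite run_alg ?eqb_id ?eqbF_neg /=.
rewrite mulrCA -expRD.
have hW := W_ge0 w.
case: ifP => h.
  rewrite -{1}(mulr1 (W w)); apply: ler_wpM2l => //.
  apply: le_trans (expR_ge1Dx _); rewrite lerDl.
  have : 0 <= S I w - t%:R * tau.
    by move: h; rewrite -leNgt subr_ge0.
  move=> h2; have := mulr_ge0 hl h2; lra.
by apply: mulr_ge0 => //; apply: ltW; apply: expR_gt0.
Qed.

End Prob.

Section Num.
Variable R : realType.

Lemma expR_le2 {mu : R} : -(1/2) <= mu <= 1/2 -> expR mu <= 1 + mu + 2 * mu ^+ 2.
Proof.
move=> /andP [h1 h2].
have h := expR_ge1Dx (- mu); rewrite expRN in h.
have e0 := expR_gt0 mu.
have hm : 0 < 1 - mu by lra.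
rewrite -(ler_pM2r hm).
apply: (@le_trans _ _ 1).
  have : (1 - mu) * (expR mu) <= (expR mu)^-1 * expR mu by rewrite ler_pM2r.
  by rewrite mulVf ?gt_eqF // mulrC.
nra.
Qed.

Lemma factor_le {mu r : R} : -(1/2) <= mu <= 1/2 -> 0 <= r <= 1 ->
  0 <= 1 + (expR mu - 1) * r <= expR (r * mu + 2 * mu ^+ 2).
Proof.
move=> hmu /andP [r0 r1].
have e0 := expR_gt0 mu.
have e2 := expR_le2 hmu.
apply/andP; split; first nra.
apply: (le_trans _ (expR_ge1Dx _)).
have : 0 <= mu ^+ 2 by apply: sqr_ge0.
nra.
Qed.

Lemma pow_le (x y : R) (t : nat) : 0 <= x -> x <= expR y -> x ^+ t <= expR (t%:R * y).
Proof.
move=> x0 xy; rewrite expRM_natl; apply: (lerXn2r t) => //; rewrite nnegrE //.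
exact: ltW (expR_gt0 _).
Qed.

Lemma chernA (t : nat) (r tau Dl : R) : 0 <= r <= 1 -> 0 < Dl <= 1 -> tau + Dl <= r ->
  expR (Dl / 4 * (t%:R * tau)) * (1 + (expR (- (Dl / 4)) - 1) * r) ^+ t
  <= expR (- (t%:R * (Dl ^+ 2 / 8))).
Proof.
move=> hr /andP [d0 d1] hgap.
have hmu : -(1/2) <= - (Dl / 4) <= 1/2 by apply/andP; split; lra.
have /andP [f0 f1] := factor_le hmu hr.
have t0 : 0 <= (t%:R : R) by [].
apply: (le_trans (y := expR (Dl / 4 * (t%:R * tau)) * expR (t%:R * (r * - (Dl / 4) + 2 * (- (Dl / 4)) ^+ 2)))).
  by apply: ler_wpM2l; [apply: ltW; apply: expR_gt0 | apply: pow_le].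
rewrite -expRD ler_expR.
have : Dl / 4 * tau + (r * - (Dl / 4) + 2 * (- (Dl / 4)) ^+ 2) <= - (Dl ^+ 2 / 8) by nra.
move=> h; have := ler_wpM2l t0 h; nra.
Qed.

Lemma chernB (t : nat) (r tau Dl : R) : 0 <= r <= 1 -> 0 < Dl <= 1 -> r + Dl <= tau ->
  expR (- (Dl / 4 * (t%:R * tau))) * (1 + (expR (Dl / 4) - 1) * r) ^+ t
  <= expR (- (t%:R * (Dl ^+ 2 / 8))).
Proof.
move=> hr /andP [d0 d1] hgap.
have hmu : -(1/2) <= (Dl / 4) <= 1/2 by apply/andP; split; lra.
have /andP [f0 f1] := factor_le hmu hr.
have t0 : 0 <= (t%:R : R) by [].
apply: (le_trans (y := expR (- (Dl / 4 * (t%:R * tau))) * expR (t%:R * (r * (Dl / 4) + 2 * (Dl / 4) ^+ 2)))).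
  by apply: ler_wpM2l; [apply: ltW; apply: expR_gt0 | apply: pow_le].
rewrite -expRD ler_expR.
have : - (Dl / 4 * tau) + (r * (Dl / 4) + 2 * (Dl / 4) ^+ 2) <= - (Dl ^+ 2 / 8) by nra.
move=> h; have := ler_wpM2l t0 h; nra.
Qed.

Lemma expR_delta (x delta : R) : 0 < delta -> ln (delta^-1) <= x -> expR (- x) <= delta.
Proof.
move=> d0 h; have -> : delta = expR (ln delta) by rewrite lnK ?posrE.
rewrite ler_expR.
by move: h; rewrite lnV ?posrE //; lra.
Qed.

Lemma bern (x : R) (k : nat) : 0 <= x <= 1 -> 1 - k%:R * x <= (1 - x) ^+ k.
Proof.
move=> /andP [x0 x1]; elim: k => [|k IH]; first by rewrite mul0r subr0 expr0.
rewrite exprS -natr1.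
have h1 : 0 <= 1 - x by lra.
have := ler_wpM2l h1 IH.
have : 0 <= k%:R * x ^+ 2 by apply: mulr_ge0 => //; apply: sqr_ge0.
nra.
Qed.

End Num.

Section Param.
Variable R : realType.
Variable m : nat.
Hypothesis m0 : (0 < m)%N.

Definition zz : R := (2 * m%:R)^-1.
Definition qq : R := 1 - zz.

Lemma zz_prop : 0 < zz /\ m%:R * zz = 1/2 /\ 1 <= (m%:R : R).
Proof.
have hm : 1 <= (m%:R : R) by rewrite ler1n.
have hm0 : (m%:R : R) != 0 by rewrite pnatr_eq0 -lt0n.
split; first by rewrite /zz invr_gt0; lra.
split => //; rewrite /zz invfM mulrCA mulfV // mulr1; lra.
Qed.

Lemma qq01 : 0 <= qq <= 1.
Proof. have [h1 [h2 h3]] := zz_prop; rewrite /qq; apply/andP; split; nra. Qed.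

Lemma a_ge : 1/2 <= qq ^+ m.-1.
Proof.
have [h1 [h2 h3]] := zz_prop.
have hz : 0 <= zz <= 1 by apply/andP; split; nra.
apply: le_trans (bern _ _ m.-1 hz).
have -> : (m.-1%:R : R) = m%:R - 1 by rewrite -[in RHS](prednK m0) -natr1 addrK.
nra.
Qed.

Lemma caseA d : (d < m)%N -> qq ^+ m.-1 <= qq ^+ d.
Proof.
move=> hd; have /andP [q0 q1] := qq01.
apply: ler_wiXn2l => //; by rewrite -ltnS prednK.
Qed.

Lemma caseB d (eps : R) : 0 < eps <= 1 -> (1 + eps) * m%:R < d%:R ->
  qq ^+ d <= qq ^+ m.-1 - eps / 6.
Proof.
move=> /andP [e0 e1] hd.
have [h1 [h2 h3]] := zz_prop.
have /andP [q0 q1] := qq01.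
have ha := a_ge.
have hmd : (m%:R : R) < d%:R by nra.
have hmd' : (m.-1 <= d)%N by rewrite ltr_nat in hmd; apply: leq_trans (leq_pred m) (ltnW hmd).
have -> : (d = m.-1 + (d - m.-1))%N by rewrite subnKC.
rewrite exprD.
set k := (d - m.-1)%N.
have hk : (k%:R : R) = d%:R - m%:R + 1.
  rewrite /k natrB //.
  have -> : (m.-1%:R : R) = m%:R - 1 by rewrite -[in RHS](prednK m0) -natr1 addrK.
  lra.
have hq : qq <= expR (- zz) by rewrite /qq; apply: le_trans (expR_ge1Dx _); lra.
have hqk : qq ^+ k <= expR (- (eps / 2)).
  apply: le_trans (pow_le _ _ _ k q0 hq) _; rewrite ler_expR hk.
  nra.
have he := expR_ge1Dx (eps / 2).
have he2 : expR (- (eps / 2)) * (1 + eps / 2) <= 1.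
  rewrite expRN; have e0' := expR_gt0 (eps / 2).
  rewrite -(ler_pM2l e0') mulrA mulfV ?gt_eqF // mul1r mulr1 //.
have hprod : qq ^+ m.-1 * qq ^+ k * (1 + eps / 2) <= qq ^+ m.-1.
  have a0 : 0 <= qq ^+ m.-1 by lra.
  have b0 : 0 <= qq ^+ k by apply: exprn_ge0.
  have : qq ^+ k * (1 + eps / 2) <= 1.
    apply: le_trans he2; apply: ler_wpM2r => //; lra.
  move=> h; have := ler_wpM2l a0 h; rewrite mulr1 mulrA //.
have h5 : 0 < 1 + eps / 2 by lra.
rewrite -(ler_pM2r h5); apply: le_trans hprod _.
have : 0 <= eps * (qq ^+ m.-1 / 2 - 1/6 - eps / 12) by apply: mulr_ge0; lra.
nra.
Qed.

End Param.

Lemma zz0 (R : realType) m : (0 < m)%N -> 0 <= zz R m.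
Proof. move=> m0; have [h1 _] := zz_prop R m m0; exact: ltW. Qed.
Lemma zz1 (R : realType) m : (0 < m)%N -> zz R m <= 1.
Proof. move=> m0; have [h1 [h2 h3]] := zz_prop R m m0; nra. Qed.

Section Const.
Variable R : realType.
Variables (n : nat) (a : R).
Hypothesis a0 : 0 <= a.
Hypothesis a1 : a <= 1.
Definition cw (b : bool) : R := if b then a else 1 - a.
Lemma cw_ge0 b : 0 <= cw b.
Proof. by case: b => //=; rewrite subr_ge0. Qed.
Lemma cw_sum : \sum_b cw b = 1.
Proof. by rewrite big_bool /= addrC subrK. Qed.
Definition calg : nonadaptive_alg R n 0 :=
  @NonAdaptiveAlg R n 0 bool cw cw_ge0 cw_sum (fun _ _ => set0) (fun w _ => w).
Lemma calg_true I : prob_output calg I true = a.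
Proof. by rewrite /prob_output /run /= big_pred1_eq. Qed.
Lemma calg_false I : prob_output calg I false = 1 - a.
Proof. by rewrite /prob_output /run /= big_pred1_eq. Qed.
End Const.

Theorem lemma15 (R : realType) :
  exists C : R, 0 < C /\
  forall (n m : nat) (eps delta : R),
    0 < eps <= 1 -> 0 < delta < 1 ->
    exists (t : nat) (A : nonadaptive_alg R n t),
      (t%:R <= C * (log2 (delta^-1) / eps ^+ 2)) /\
      forall I : {set 'I_n},
        ((#|I| < m)%N -> 1 - delta <= prob_output A I false) /\
        ((1 + eps) * m%:R < #|I|%:R -> 1 - delta <= prob_output A I true).
Proof.
exists 1153; split; first by rewrite ltr0n.
move=> n m eps delta /andP [e0 e1] /andP [d0 d1].
have l2 : 0 < ln (2 : R) by apply: ln_gt0; rewrite ltr1n.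
have l21 : ln (2 : R) <= 1.
  rewrite -[leRHS](expRK 1) ler_ln ?posrE ?expR_gt0 //.
  by apply: le_trans (expR_ge1Dx 1); lra.
have dinv : 1 <= delta^-1 by rewrite invf_ge1 // ltW.
have L0 : 0 <= ln (delta^-1) by apply: ln_ge0.
have e2 : 0 < eps ^+ 2 by apply: exprn_gt0.
have hL : 0 <= log2 (delta^-1) / eps ^+ 2.
  by rewrite /log2; apply: divr_ge0; [apply: divr_ge0 => //; apply: ltW | apply: ltW].
case: (posnP m) => [->|m0].
  have h0 : (0 : R) <= 1 by [].
  exists 0%N, (calg _ n _ h0 (lexx 1)); split; first by rewrite mulr_ge0.
  move=> I; split; first by rewrite ltn0.
  by move=> _; rewrite (calg_true _ _ _ _ _); lra.
case: (lerP (1/2) delta) => hd.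
  have h0 : (0 : R) <= 1/2 by lra.
  have h1 : (1/2 : R) <= 1 by lra.
  exists 0%N, (calg _ n _ h0 h1); split; first by rewrite mulr_ge0.
  by move=> I; split => _; rewrite ?(calg_true _ _ _ _ _) ?(calg_false _ _ _ _ _); lra.
set Dl := eps / 12.
set a := qq R m ^+ m.-1.
set tau := a - Dl.
set L := ln (delta^-1).
have Ll2 : ln 2 <= L.
  rewrite /L ler_ln ?posrE ?invr_gt0 ?ltr0n //.
  rewrite -(ler_pM2r d0) mulVf ?gt_eqF //; lra.
have Dl2 : 0 < Dl ^+ 2 by apply: exprn_gt0; rewrite /Dl; lra.
set x := 8 * L / Dl ^+ 2.
have x0 : 0 <= x by rewrite /x; apply: divr_ge0; [lra | apply: ltW].
have /andP [tx1 tx2] := truncn_itv x0.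
set t := (Num.trunc x).+1.
have ha := a_ge R m m0.
exists t, (alg _ _ _ _ (zz0 _ _ m0) (zz1 _ _ m0) tau); split.
  have hxt : (t%:R : R) <= x + 1 by rewrite /t -natr1 lerD2r.
  apply: le_trans hxt _.
  set u := log2 (delta^-1).
  have hu : L <= u * 1 by rewrite mulr1 /u /log2 -/L ler_pdivlMr //; nra.
  have hu1 : 1 <= u by rewrite /u /log2 -/L ler_pdivlMr // mul1r.
  set v := (eps ^+ 2)^-1.
  have hv : 1 <= v by rewrite /v invf_ge1 //; rewrite expr_le1 //; lra.
  have -> : x = 1152 * L * v.
    rewrite /x /Dl /v expr_div_n; field.
    by apply: lt0r_neq0.
  rewrite -/(u / eps ^+ 2) mulrA -/v.
  have : L * v <= u * v by apply: ler_wpM2r; [rewrite /v; apply: ltW; rewrite invr_gt0 | rewrite mulr1 in hu].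
  nra.
have hdel : ln (delta^-1) <= t%:R * (Dl ^+ 2 / 8).
  have : x <= t%:R by apply: ltW.
  rewrite /x -/L ler_pdivrMr // => h.
  rewrite mulrA; lra.
have Dl01 : 0 < Dl <= 1 by apply/andP; split; rewrite /Dl; lra.
have hr (I : {set 'I_n}) : 0 <= (1 - zz R m) ^+ #|I| <= 1.
  have /andP [q0 q1] := qq01 R m m0.
  by apply/andP; split; [apply: exprn_ge0 | apply: exprn_ile1].
move=> I; split => hI.
  have := prob_sum _ n t _ (zz0 _ _ m0) (zz1 _ _ m0) tau I.
  have hDl4 : 0 <= Dl / 4 by rewrite /Dl; lra.
  have := probT_le _ n t _ (zz0 _ _ m0) (zz1 _ _ m0) tau I _ hDl4.
  have hgap : tau + Dl <= (1 - zz R m) ^+ #|I|.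
    by rewrite /tau subrK; apply: (caseA _ _ m0).
  have := chernA _ t _ _ _ (hr I) Dl01 hgap.
  have := expR_delta _ (t%:R * (Dl ^+ 2 / 8)) _ d0 hdel.
  lra.
have := prob_sum _ n t _ (zz0 _ _ m0) (zz1 _ _ m0) tau I.
have hDl4 : 0 <= Dl / 4 by rewrite /Dl; lra.
have := probF_le _ n t _ (zz0 _ _ m0) (zz1 _ _ m0) tau I _ hDl4.
have hgap : (1 - zz R m) ^+ #|I| + Dl <= tau.
  have := caseB _ _ m0 (#|I|) eps (ltac:(by apply/andP; split)) hI.
  rewrite /tau /Dl -/a -/(qq R m); lra.
have := chernB _ t _ _ _ (hr I) Dl01 hgap.
have := expR_delta _ (t%:R * (Dl ^+ 2 / 8)) _ d0 hdel.
lra.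
Qed.
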